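(* Let $r>0$, $\tau>0$, $\kappa>0$, $p\in[0,1]$ and $\varepsilon=pe^{-\tau}$. Let $\psi=(\psi_S,\psi_I,\psi_Q):[-\tau-\kappa,0]\to\mathbb{R}^3$ be a piecewise continuous function with values in the simplex $\Delta^2=\{u\in\mathbb{R}^3: u_1+u_2+u_3=1,\ u_i\ge 0\}$, and assume \[ \psi_I(0)\ \ge\ rp\int_{-\tau}^{0}e^{\theta}\psi_S(\theta)\psi_I(\theta)\,d\theta,\qquad \psi_Q(0)\ \ge\ r\varepsilon\int_{-\tau-\kappa}^{0}\psi_S(\theta)\psi_I(\theta)\,d\theta . \] Let $x(t;\psi)=(S(t),I(t),Q(t))$, $t\ge 0$, be the solution of the SIQ system with initial history $\psi$. Then $S(t),I(t),Q(t)\ge 0$ and $S(t)+I(t)+Q(t)=1$ for all $t\ge 0$, and $x_t(\psi)\in\tilde{\mathcal{C}}$ for all $t\ge\tau+\kappa$. In particular, if in addition $\psi\in\tilde{\mathcal{C}}$ (i.e. $\psi$ is continuous), then $x_t(\psi)\in\tilde{\mathcal{C}}$ for all $t\ge 0$.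
   Context: The SIQ system is the system of delay differential equations \[ \dot S(t)=-rS(t)I(t)+I(t)+r\varepsilon S(t-\tau-\kappa)I(t-\tau-\kappa),\quad \dot I(t)=rS(t)I(t)-I(t)-r\varepsilon S(t-\tau)I(t-\tau), \] \[ \dot Q(t)=r\varepsilon\big[S(t-\tau)I(t-\tau)-S(t-\tau-\kappa)I(t-\tau-\kappa)\big], \] with parameters $r>0,\tau>0,\kappa>0,p\in[0,1]$, $\varepsilon=pe^{-\tau}$. Given an initial history $\psi$ on $[-\tau-\kappa,0]$, $x(t;\psi)$ denotes the solution for $t\ge0$ with $x(\theta;\psi)=\psi(\theta)$ for $\theta\in[-\tau-\kappa,0]$, and $x_t(\psi)(\theta)=x(t+\theta;\psi)$, $\theta\in[-\tau-\kappa,0]$. $\tilde{\mathcal{C}}$ denotes the set of continuous functions $\phi:[-\tau-\kappa,0]\to\mathbb{R}^3$ with $\phi(\theta)\in\Delta^2$ for all $\theta$. *)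

(* Defs.v *)
From Stdlib Require Import Reals.
From Coquelicot Require Import Coquelicot.
Open Scope R_scope.

Definition Icc (a b : R) (x : R) : Prop := a <= x <= b.

Definition cont_within (f : R -> R) (a b x : R) : Prop :=
  filterlim f (within (Icc a b) (locally x)) (locally (f x)).

Definition continuous_on_Icc (f : R -> R) (a b : R) : Prop :=
  forall x, a <= x <= b -> cont_within f a b x.

Definition piecewise_continuous (f : R -> R) (a b : R) : Prop :=
  (exists l : list R, forall x, a <= x <= b -> ~ List.In x l -> cont_within f a b x)
  /\ (forall c, a < c <= b -> exists L : R, filterlim f (at_left c) (locally L))
  /\ (forall c, a <= c < b -> exists L : R, filterlim f (at_right c) (locally L)).

Definition in_simplex (u1 u2 u3 : R) : Prop :=
  0 <= u1 /\ 0 <= u2 /\ 0 <= u3 /\ u1 + u2 + u3 = 1.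

Definition eps (p tau : R) : R := p * exp (- tau).

Definition in_Ctilde (tau kappa : R) (phS phI phQ : R -> R) : Prop :=
  continuous_on_Icc phS (- tau - kappa) 0 /\
  continuous_on_Icc phI (- tau - kappa) 0 /\
  continuous_on_Icc phQ (- tau - kappa) 0 /\
  forall th, - tau - kappa <= th <= 0 -> in_simplex (phS th) (phI th) (phQ th).

Definition seg (x : R -> R) (t : R) : R -> R := fun th => x (t + th).

(* (S, I, Q) is a solution of the SIQ system with initial history psi:
   it coincides with psi on [-tau-kappa, 0], and for t >= 0 it satisfies the
   integrated form x(t) = x(0) + int_0^t f(x_s) ds (the integrand being
   Riemann integrable on [0,t]); this is the standard notion of solution for
   piecewise continuous initial histories. *)
Definition SIQ_solution (r tau kappa p : R) (psS psI psQ S I Q : R -> R) : Prop :=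
  (forall th, - tau - kappa <= th <= 0 ->
     S th = psS th /\ I th = psI th /\ Q th = psQ th) /\
  (forall t, 0 <= t ->
     is_RInt (fun s => - r * S s * I s + I s
                       + r * eps p tau * S (s - tau - kappa) * I (s - tau - kappa))
             0 t (S t - S 0) /\
     is_RInt (fun s => r * S s * I s - I s
                       - r * eps p tau * S (s - tau) * I (s - tau))
             0 t (I t - I 0) /\
     is_RInt (fun s => r * eps p tau * (S (s - tau) * I (s - tau)
                       - S (s - tau - kappa) * I (s - tau - kappa)))
             0 t (Q t - Q 0)).

(* Main.v *)
Require Import Defs.
From Stdlib Require Import Reals.
From Coquelicot Require Import Coquelicot.
From Stdlib Require Import Lra Psatz List Classical.
Open Scope R_scope.
Implicit Types (f g h G : R -> R) (x y l v : R).

Lemma iR_plus f g a b x y : is_RInt f a b x -> is_RInt g a b y ->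
  is_RInt (fun t => f t + g t) a b (x + y).
Proof. intros H1 H2. exact (is_RInt_plus f g a b x y H1 H2). Qed.

Lemma iR_minus f g a b x y : is_RInt f a b x -> is_RInt g a b y ->
  is_RInt (fun t => f t - g t) a b (x - y).
Proof. intros H1 H2. exact (is_RInt_minus f g a b x y H1 H2). Qed.

Lemma iR_scal f a b k x : is_RInt f a b x -> is_RInt (fun t => k * f t) a b (k * x).
Proof. intros H. exact (is_RInt_scal f a b k x H). Qed.

Lemma iR_ext f g a b x : (forall t, f t = g t) -> is_RInt f a b x -> is_RInt g a b x.
Proof. intros E H. apply is_RInt_ext with f; auto. Qed.

Lemma iR_extv f a b x y : x = y -> is_RInt f a b x -> is_RInt f a b y.
Proof. intros ->; auto. Qed.

Lemma iR_chasles f a b c x y : is_RInt f a b x -> is_RInt f b c y -> is_RInt f a c (x + y).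
Proof. intros H1 H2. exact (is_RInt_Chasles f a b c x y H1 H2). Qed.

Lemma iR_swap f a b x : is_RInt f b a x -> is_RInt f a b (- x).
Proof. intros H. exact (is_RInt_swap f a b x H). Qed.

Lemma iR_const k a b : is_RInt (fun _ => k) a b (k * (b - a)).
Proof. replace (k * (b - a)) with (scal (b - a) k). apply is_RInt_const. unfold scal. simpl. unfold mult. simpl. ring. Qed.

Lemma iR_shift f a b d l : is_RInt f (a + d) (b + d) l -> is_RInt (fun y => f (y + d)) a b l.
Proof. intros H.
  assert (H' : is_RInt f (1 * a + d) (1 * b + d) l) by (replace (1*a) with a by ring; replace (1*b) with b by ring; auto).
  generalize (is_RInt_comp_lin f 1 d a b l H'). apply is_RInt_ext.
  intros x _. unfold scal; simpl; unfold mult; simpl. replace (1*x) with x by ring. ring. Qed.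

Lemma iR_sub f a u t x y : is_RInt f a u x -> is_RInt f a t y -> is_RInt f u t (y - x).
Proof. intros H1 H2. apply iR_extv with (- x + y). ring.
  apply iR_chasles with a; auto. apply iR_swap; auto. Qed.

Lemma iR_ex f a b x : is_RInt f a b x -> ex_RInt f a b.
Proof. intros H; exists x; auto. Qed.

Lemma iR_lower f u s v m : u <= s -> is_RInt f u s v ->
  (forall x, u < x < s -> m <= f x) -> m * (s - u) <= v.
Proof. intros Hus H Hm.
  rewrite <- (is_RInt_unique f u s v H).
  rewrite <- (is_RInt_unique _ u s _ (iR_const m u s)).
  apply RInt_le; auto. exists (m * (s - u)); apply iR_const. eapply iR_ex; eauto. Qed.

Lemma iR_upper f u s v m : u <= s -> is_RInt f u s v ->
  (forall x, u < x < s -> f x <= m) -> v <= m * (s - u).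
Proof. intros Hus H Hm.
  rewrite <- (is_RInt_unique f u s v H).
  rewrite <- (is_RInt_unique _ u s _ (iR_const m u s)).
  apply RInt_le; auto. eapply iR_ex; eauto. exists (m * (s - u)); apply iR_const. Qed.

Lemma iR_abs f u s v m : u <= s -> is_RInt f u s v ->
  (forall x, u < x < s -> Rabs (f x) <= m) -> Rabs v <= m * (s - u).
Proof. intros Hus H Hm. apply Rabs_le. split.
  - replace (- (m * (s - u))) with ((-m) * (s-u)) by ring. apply iR_lower with f; auto.
    intros x Hx; specialize (Hm x Hx); apply Rabs_le_between in Hm; lra.
  - apply iR_upper with f; auto. intros x Hx; specialize (Hm x Hx); apply Rabs_le_between in Hm; lra. Qed.

Lemma iR_zero a b : is_RInt (fun _ => 0) a b 0.
Proof. apply iR_extv with (0 * (b - a)). ring. apply iR_const. Qed.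

Lemma iR_uniq f a b x y : is_RInt f a b x -> is_RInt f a b y -> x = y.
Proof. intros H1 H2. rewrite <- (is_RInt_unique f a b x H1). apply is_RInt_unique; auto. Qed.

Lemma ex_RInt_absbound f a b : a <= b -> ex_RInt f a b ->
  exists M, 0 <= M /\ forall x, a <= x <= b -> Rabs (f x) <= M.
Proof. intros Hab H.
  destruct (Riemann_integrable_bound f a b (ex_RInt_Reals_0 _ _ _ H)) as [s1 H1].
  assert (H' : Riemann_integrable (fun x => - f x) a b).
  { apply ex_RInt_Reals_0. destruct H as [v Hv]. exists (-v). apply iR_extv with ((-1) * v). ring. 
    apply iR_ext with (fun x => (-1) * f x). intros; ring. apply iR_scal; auto. }
  destruct (Riemann_integrable_bound _ a b H') as [s2 H2].
  exists (Rmax 0 (Rmax s1 s2)). split. apply Rmax_l.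
  intros x Hx. rewrite Rmin_left in H1, H2 by auto. rewrite Rmax_right in H1, H2 by auto.
  specialize (H1 x Hx); specialize (H2 x Hx). apply Rabs_le.
  generalize (Rmax_l 0 (Rmax s1 s2)) (Rmax_r 0 (Rmax s1 s2)) (Rmax_l s1 s2) (Rmax_r s1 s2). intros. lra. Qed.

Definition Lip (g : R -> R) (a b : R) := exists L, 0 <= L /\
  forall x y, a <= x <= b -> a <= y <= b -> Rabs (g x - g y) <= L * Rabs (x - y).

Lemma lip_of_int h G a b : a <= b ->
  (forall u t, a <= u -> u <= t -> t <= b -> is_RInt h u t (G t - G u)) -> Lip G a b.
Proof. intros Hab H.
  destruct (ex_RInt_absbound h a b Hab (iR_ex _ _ _ _ (H a b (Rle_refl a) Hab (Rle_refl b)))) as [M [HM0 HM]].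
  exists M; split; auto. intros x y Hx Hy.
  destruct (Rle_dec y x).
  - generalize (iR_abs h y x (G x - G y) M r (H y x ltac:(lra) r ltac:(lra))). intros K.
    rewrite (Rabs_right (x - y)) by lra. apply K. intros z Hz; apply HM; lra.
  - generalize (iR_abs h x y (G y - G x) M ltac:(lra) (H x y ltac:(lra) ltac:(lra) ltac:(lra))). intros K.
    rewrite Rabs_minus_sym. rewrite (Rabs_left (x - y)) by lra. replace (- (x - y)) with (y - x) by ring.
    apply K. intros z Hz; apply HM; lra. Qed.

Definition ED f x := forall e, 0 < e -> exists d, 0 < d /\
  forall y, Rabs (y - x) < d -> Rabs (f y - f x) < e.
Definition LL f c L := forall e, 0 < e -> exists d, 0 < d /\
  forall y, c - d < y < c -> Rabs (f y - L) < e.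
Definition RL f c L := forall e, 0 < e -> exists d, 0 < d /\
  forall y, c < y < c + d -> Rabs (f y - L) < e.
Definition CW f a b x := forall e, 0 < e -> exists d, 0 < d /\
  forall y, a <= y <= b -> Rabs (y - x) < d -> Rabs (f y - f x) < e.

Lemma cont_of_ED f x : ED f x -> continuous f x.
Proof. intros H. apply filterlim_locally. intros eps.
  destruct (H eps (cond_pos eps)) as [d [Hd Hf]]. exists (mkposreal d Hd).
  intros y Hy. apply Hf. exact Hy. Qed.

Lemma ED_of_cont f x : continuous f x -> ED f x.
Proof. intros H e He. destruct (proj1 (filterlim_locally f (f x)) H (mkposreal e He)) as [d Hd].
  exists d; split. apply cond_pos. intros y Hy. apply (Hd y Hy). Qed.

Lemma lim_of_LL f c L : LL f c L -> filterlim f (at_left c) (locally L).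
Proof. intros H. apply filterlim_locally. intros eps.
  destruct (H eps (cond_pos eps)) as [d [Hd Hf]]. exists (mkposreal d Hd).
  intros y Hy Hyc. apply Hf. change (Rabs (y - c) < d) in Hy. apply Rabs_def2 in Hy. lra. Qed.

Lemma LL_of_lim f c L : filterlim f (at_left c) (locally L) -> LL f c L.
Proof. intros H e He. destruct (proj1 (filterlim_locally f L) H (mkposreal e He)) as [d Hd].
  exists d; split. apply cond_pos. intros y Hy. apply (Hd y). change (Rabs (y - c) < d).
  apply Rabs_def1; lra. lra. Qed.

Lemma lim_of_RL f c L : RL f c L -> filterlim f (at_right c) (locally L).
Proof. intros H. apply filterlim_locally. intros eps.
  destruct (H eps (cond_pos eps)) as [d [Hd Hf]]. exists (mkposreal d Hd).
  intros y Hy Hyc. apply Hf. change (Rabs (y - c) < d) in Hy. apply Rabs_def2 in Hy. lra. Qed.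

Lemma RL_of_lim f c L : filterlim f (at_right c) (locally L) -> RL f c L.
Proof. intros H e He. destruct (proj1 (filterlim_locally f L) H (mkposreal e He)) as [d Hd].
  exists d; split. apply cond_pos. intros y Hy. apply (Hd y). change (Rabs (y - c) < d).
  apply Rabs_def1; lra. lra. Qed.

Lemma cw_of_CW f a b x : CW f a b x -> cont_within f a b x.
Proof. intros H. unfold cont_within. apply filterlim_locally. intros eps.
  destruct (H eps (cond_pos eps)) as [d [Hd Hf]]. exists (mkposreal d Hd).
  intros y Hy Hi. apply Hf. exact Hi. exact Hy. Qed.

Lemma CW_of_cw f a b x : cont_within f a b x -> CW f a b x.
Proof. intros H e He. destruct (proj1 (filterlim_locally f (f x)) H (mkposreal e He)) as [d Hd].
  exists d; split. apply cond_pos. intros y Hi Hy. apply (Hd y Hy Hi). Qed.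

Lemma ED_of_CW_int f a b x : a < x < b -> CW f a b x -> ED f x.
Proof. intros Hx H e He. destruct (H e He) as [d [Hd Hf]].
  exists (Rmin d (Rmin (x - a) (b - x))). split.
  apply Rmin_pos; auto. apply Rmin_pos; lra.
  intros y Hy. generalize (Rmin_l d (Rmin (x - a) (b - x))) (Rmin_r d (Rmin (x - a) (b - x)))
   (Rmin_l (x - a) (b - x)) (Rmin_r (x - a) (b - x)). intros.
  apply Rabs_def2 in Hy. apply Hf. lra. apply Rabs_def1; lra. Qed.

Lemma LL_of_ED f c : ED f c -> LL f c (f c).
Proof. intros H e He. destruct (H e He) as [d [Hd Hf]]. exists d; split; auto.
  intros y Hy. apply Hf. apply Rabs_def1; lra. Qed.

Lemma RL_of_ED f c : ED f c -> RL f c (f c).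
Proof. intros H e He. destruct (H e He) as [d [Hd Hf]]. exists d; split; auto.
  intros y Hy. apply Hf. apply Rabs_def1; lra. Qed.

Definition PW f a b :=
  (exists l : list R, forall x, a < x < b -> ~ In x l -> continuous f x) /\
  (forall c, a < c <= b -> exists L, filterlim f (at_left c) (locally L)) /\
  (forall c, a <= c < b -> exists L, filterlim f (at_right c) (locally L)).

Lemma PW_base f a b L1 L2 : a < b -> (forall x, a < x < b -> continuous f x) ->
  RL f a L1 -> LL f b L2 -> ex_RInt f a b.
Proof. intros Hab Hc H1 H2.
  set (g := fun y => if Rle_dec y a then L1 else if Rle_dec b y then L2 else f y).
  apply ex_RInt_ext with g.
  { intros x Hx. rewrite Rmin_left in Hx by lra. rewrite Rmax_right in Hx by lra.
    unfold g. destruct (Rle_dec x a); [lra|]. destruct (Rle_dec b x); [lra|]. auto. }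
  apply (@ex_RInt_continuous R_CompleteNormedModule). intros z Hz. rewrite Rmin_left in Hz by lra. rewrite Rmax_right in Hz by lra.
  apply cont_of_ED. intros e He.
  destruct (Req_dec z a) as [Ea|Na].
  - subst z. destruct (H1 e He) as [d [Hd Hf]]. exists (Rmin d (b - a)). split.
    apply Rmin_pos; lra. intros y Hy. generalize (Rmin_l d (b - a)) (Rmin_r d (b - a)); intros.
    apply Rabs_def2 in Hy. unfold g. destruct (Rle_dec a a); [|lra].
    destruct (Rle_dec y a). rewrite Rminus_diag, Rabs_R0; auto.
    destruct (Rle_dec b y). lra. apply Hf; lra.
  - destruct (Req_dec z b) as [Eb|Nb].
    + subst z. destruct (H2 e He) as [d [Hd Hf]]. exists (Rmin d (b - a)). split.
      apply Rmin_pos; lra. intros y Hy. generalize (Rmin_l d (b - a)) (Rmin_r d (b - a)); intros.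
      apply Rabs_def2 in Hy. unfold g. destruct (Rle_dec b a); [lra|]. destruct (Rle_dec b b); [|lra].
      destruct (Rle_dec y a). lra.
      destruct (Rle_dec b y). rewrite Rminus_diag, Rabs_R0; auto. apply Hf; lra.
    + assert (Hz' : a < z < b) by lra.
      destruct (ED_of_cont f z (Hc z Hz') e He) as [d [Hd Hf]].
      exists (Rmin d (Rmin (z - a) (b - z))). split. apply Rmin_pos; auto. apply Rmin_pos; lra.
      intros y Hy. generalize (Rmin_l d (Rmin (z - a) (b - z))) (Rmin_r d (Rmin (z - a) (b - z)))
       (Rmin_l (z - a) (b - z)) (Rmin_r (z - a) (b - z)). intros.
      apply Rabs_def2 in Hy as Hy'. unfold g.
      destruct (Rle_dec z a); [lra|]. destruct (Rle_dec b z); [lra|].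
      destruct (Rle_dec y a); [lra|]. destruct (Rle_dec b y); [lra|]. apply Hf. lra. Qed.

Lemma PW_int f a b : a <= b -> PW f a b -> ex_RInt f a b.
Proof. intros Hab [[l Hl] [HL HR]]. revert a b Hab Hl HL HR.
  induction l as [|x l IH]; intros a b Hab Hl HL HR.
  - destruct (Req_dec a b) as [E|N]. subst; apply ex_RInt_point.
    destruct (HR a ltac:(lra)) as [L1 H1]. destruct (HL b ltac:(lra)) as [L2 H2].
    apply PW_base with L1 L2. lra. intros y Hy; apply Hl; auto.
    apply RL_of_lim; auto. apply LL_of_lim; auto.
  - destruct (classic (a < x < b)) as [Hx|Hx].
    + apply ex_RInt_Chasles with x.
      * apply IH. lra. intros y Hy Hn. apply Hl. lra. intros [E|E]; [lra|auto].
        intros c Hc; apply HL; lra. intros c Hc; apply HR; lra.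
      * apply IH. lra. intros y Hy Hn. apply Hl. lra. intros [E|E]; [lra|auto].
        intros c Hc; apply HL; lra. intros c Hc; apply HR; lra.
    + apply IH; auto. intros y Hy Hn. apply Hl; auto. intros [E|E]; [subst; auto|auto]. Qed.

Lemma PW_mult f g a b : PW f a b -> PW g a b -> PW (fun x => f x * g x) a b.
Proof. intros [[l1 Hl1] [HL1 HR1]] [[l2 Hl2] [HL2 HR2]]. split; [|split].
  - exists (l1 ++ l2). intros x Hx Hn.
    apply (continuous_mult f g x). apply Hl1; auto. intro; apply Hn; apply in_or_app; auto.
    apply Hl2; auto. intro; apply Hn; apply in_or_app; auto.
  - intros c Hc. destruct (HL1 c Hc) as [L H1]. destruct (HL2 c Hc) as [M H2].
    exists (L * M). eapply (filterlim_comp_2 f g Rmult); [exact H1|exact H2|exact (filterlim_mult L M)].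
  - intros c Hc. destruct (HR1 c Hc) as [L H1]. destruct (HR2 c Hc) as [M H2].
    exists (L * M). eapply (filterlim_comp_2 f g Rmult); [exact H1|exact H2|exact (filterlim_mult L M)]. Qed.

Lemma PW_cont f a b : (forall x, continuous f x) -> PW f a b.
Proof. intros H. split; [|split].
  - exists nil. intros; auto.
  - intros c _. exists (f c). apply lim_of_LL, LL_of_ED, ED_of_cont, H.
  - intros c _. exists (f c). apply lim_of_RL, RL_of_ED, ED_of_cont, H. Qed.

Lemma exp_mono x y : x <= y -> exp x <= exp y.
Proof. intros H. destruct (Req_dec x y). subst; lra. left; apply exp_increasing; lra. Qed.

Lemma iR_ext_on f g u t v : u <= t -> (forall s, u < s < t -> f s = g s) -> is_RInt f u t v -> is_RInt g u t v.
Proof. intros Hut E H. apply is_RInt_ext with f; auto. intros s Hs.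
  rewrite Rmin_left in Hs by lra. rewrite Rmax_right in Hs by lra. auto. Qed.

Lemma quad_const (D : R -> R) a b C : a <= b -> 0 <= C ->
  (forall x y, a <= x -> x <= y -> y <= b -> Rabs (D y - D x) <= C * (y - x) ^ 2) -> D b = D a.
Proof. intros Hab HC H.
  assert (Hn : forall n : nat, (0 < n)%nat -> Rabs (D b - D a) <= C * (b - a) ^ 2 / INR n).
  { intros n Hn. assert (HN : 0 < INR n) by (apply lt_0_INR; auto).
    set (hh := (b - a) / INR n).
    assert (Hh : 0 <= hh) by (unfold hh; apply Rdiv_le_0_compat; lra).
    assert (Hnh : INR n * hh = b - a) by (unfold hh; field; lra).
    assert (K : forall k : nat, (k <= n)%nat -> Rabs (D (a + INR k * hh) - D a) <= INR k * (C * hh ^ 2)).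
    { induction k as [|k IH]; intros Hk.
      - simpl. replace (a + 0 * hh) with a by ring. rewrite Rminus_diag, Rabs_R0. lra.
      - assert (Hk' : INR (S k) <= INR n) by (apply le_INR; auto).
        assert (Hk0 : INR k <= INR n) by (apply le_INR; lia).
        rewrite S_INR in *.
        specialize (IH ltac:(lia)).
        assert (Hs : Rabs (D (a + (INR k + 1) * hh) - D (a + INR k * hh)) <= C * hh ^ 2).
        { replace (C * hh ^ 2) with (C * ((a + (INR k + 1) * hh) - (a + INR k * hh)) ^ 2) by ring.
          apply H. generalize (pos_INR k); intros; nra. nra. nra. }
        replace (D (a + (INR k + 1) * hh) - D a) with
          ((D (a + (INR k + 1) * hh) - D (a + INR k * hh)) + (D (a + INR k * hh) - D a)) by ring.
        eapply Rle_trans. apply Rabs_triang. lra. }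
    specialize (K n (Nat.le_refl n)). rewrite Hnh in K. replace (a + (b - a)) with b in K by ring.
    replace (C * (b - a) ^ 2 / INR n) with (INR n * (C * hh ^ 2)). auto.
    unfold hh. field. lra. }
  apply Rminus_diag_uniq. destruct (Req_dec (D b - D a) 0) as [E|Ne]; auto. exfalso.
  set (d := Rabs (D b - D a)). assert (Hp : 0 < d) by (apply Rabs_pos_lt; auto).
  set (K := C * (b - a) ^ 2).
  assert (HK : 0 <= K) by (apply Rmult_le_pos; auto; apply pow2_ge_0).
  destruct (archimed_cor1 (d / (K + 1))) as [N [HN1 HN2]].
  apply Rdiv_lt_0_compat; lra.
  specialize (Hn N HN2). fold d K in Hn.
  assert (K / INR N <= K * (d / (K + 1))). { unfold Rdiv at 1. apply Rmult_le_compat_l; lra. }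
  assert (K * (d / (K + 1)) < d).
  { replace (K * (d / (K + 1))) with (d * (K / (K+1))) by (field; lra).
    assert (K / (K + 1) < 1). { apply Rmult_lt_reg_r with (K+1). lra. replace (K / (K + 1) * (K + 1)) with K by (field; lra). lra. }
    nra. }
  lra. Qed.

Lemma RInt_pt g a : RInt g a a = 0.
Proof. apply is_RInt_unique. apply (is_RInt_point (V:=R_NormedModule)). Qed.

Lemma clamp_lip x0 X y z : x0 <= X ->
  Rabs (Rmax x0 (Rmin y X) - Rmax x0 (Rmin z X)) <= Rabs (y - z).
Proof. intros H. generalize (Rle_abs (y - z)) (Rle_abs (z - y)). rewrite (Rabs_minus_sym z y). intros.
  unfold Rmax, Rmin. repeat destruct Rle_dec; apply Rabs_le; split; lra. Qed.

Lemma cont_expm x : continuous (fun s => exp (- s)) x.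
Proof. apply (ex_derive_continuous (K := R_AbsRing) (V := R_NormedModule)). auto_derive. auto. Qed.

Lemma iR_expm x y : is_RInt (fun s => exp (- s)) x y (exp (- x) - exp (- y)).
Proof.
  assert (H := is_RInt_derive (fun s => - exp (- s)) (fun s => exp (- s)) x y).
  apply iR_extv with (minus (- exp (- y)) (- exp (- x))).
  unfold minus, plus, opp; simpl. ring.
  apply H. intros z _. auto_derive. auto. ring. intros z _. apply cont_expm. Qed.

Lemma core f x0 X M : x0 <= X -> 0 <= M -> (forall s, x0 <= s <= X -> Rabs (f s) <= M) ->
  ex_RInt f x0 X -> ex_RInt (fun s => exp s * f s) x0 X ->
  forall u t, x0 <= u -> u <= t -> t <= X ->
  is_RInt (fun s => f s - exp (-s) * RInt (fun y => exp y * f y) x0 s) u t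
   (exp (-t) * RInt (fun y => exp y * f y) x0 t - exp (-u) * RInt (fun y => exp y * f y) x0 u).
Proof. intros HX HM Hb Hf Hef.
  set (ef := fun s => exp s * f s) in *.
  set (H := fun x => RInt ef x0 x).
  set (F := fun x => RInt f x0 x).
  assert (HH : forall x, x0 <= x <= X -> is_RInt ef x0 x (H x)).
  { intros x Hx. apply (RInt_correct (V := R_CompleteNormedModule)). apply ex_RInt_Chasles_1 with X; auto. }
  assert (HF : forall x, x0 <= x <= X -> is_RInt f x0 x (F x)).
  { intros x Hx. apply (RInt_correct (V := R_CompleteNormedModule)). apply ex_RInt_Chasles_1 with X; auto. }
  assert (HHd : forall x y, x0 <= x -> x <= y -> y <= X -> is_RInt ef x y (H y - H x)).
  { intros x y ? ? ?. apply iR_sub with x0; [apply HH|apply HH]; lra. }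
  assert (HFd : forall x y, x0 <= x -> x <= y -> y <= X -> is_RInt f x y (F y - F x)).
  { intros x y ? ? ?. apply iR_sub with x0; [apply HF|apply HF]; lra. }
  set (eM := exp X * M).
  assert (HeM : 0 <= eM) by (unfold eM; apply Rmult_le_pos; auto; left; apply exp_pos).
  assert (Hefb : forall s, x0 <= s <= X -> Rabs (ef s) <= eM).
  { intros s Hs. unfold ef, eM. rewrite Rabs_mult, Rabs_pos_eq by (left; apply exp_pos).
    apply Rmult_le_compat; auto. left; apply exp_pos. apply Rabs_pos. apply exp_mono; lra. }
  assert (HHl : forall x y, x0 <= x -> x <= y -> y <= X -> Rabs (H y - H x) <= eM * (y - x)).
  { intros x y ? ? ?. apply iR_abs with ef; auto. intros s Hs; apply Hefb; lra. }
  assert (HHl' : forall x y, x0 <= x <= X -> x0 <= y <= X -> Rabs (H y - H x) <= eM * Rabs (y - x)).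
  { intros x y Hx Hy. destruct (Rle_dec x y).
    rewrite (Rabs_pos_eq (y - x)) by lra. apply HHl; lra.
    rewrite Rabs_minus_sym, (Rabs_minus_sym y x), (Rabs_pos_eq (x - y)) by lra. apply HHl; lra. }
  set (cl := fun s => Rmax x0 (Rmin s X)).
  assert (Hcl : forall s, x0 <= cl s <= X).
  { intros s. unfold cl, Rmax, Rmin. destruct (Rle_dec s X); destruct (Rle_dec x0 s); destruct (Rle_dec x0 X); lra. }
  assert (Hcl2 : forall s, x0 <= s <= X -> cl s = s).
  { intros s Hs. unfold cl, Rmax, Rmin. destruct (Rle_dec s X); destruct (Rle_dec x0 s); lra. }
  set (Hc := fun s => H (cl s)).
  assert (HcC : forall z, continuous Hc z).
  { intros z. apply cont_of_ED. intros e He. exists (e / (eM + 1)). split. apply Rdiv_lt_0_compat; lra.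
    intros y Hy. unfold Hc. eapply Rle_lt_trans. apply HHl'; apply Hcl.
    eapply Rle_lt_trans. apply Rmult_le_compat_l; auto. apply clamp_lip; auto.
    apply Rle_lt_trans with ((eM + 1) * Rabs (y - z)). apply Rmult_le_compat_r. apply Rabs_pos. lra.
    apply Rmult_lt_reg_l with (/ (eM + 1)). apply Rinv_0_lt_compat; lra.
    replace (/ (eM + 1) * ((eM + 1) * Rabs (y - z))) with (Rabs (y - z)) by (field; lra).
    replace (/ (eM + 1) * e) with (e / (eM + 1)) by (field; lra). auto. }
  set (k := fun s => exp (- s) * Hc s).
  assert (HkC : forall z, continuous k z).
  { intros z. apply (continuous_mult (fun s => exp (- s)) Hc). apply cont_expm. apply HcC. }
  assert (Hk : forall x y, ex_RInt k x y).
  { intros x y. apply (@ex_RInt_continuous R_CompleteNormedModule). intros; apply HkC. }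
  set (J := fun x => RInt k x0 x).
  assert (HJd : forall x y, is_RInt k x y (J y - J x)).
  { intros x y. apply iR_sub with x0; apply (RInt_correct (V := R_CompleteNormedModule)); apply Hk. }
  set (D := fun x => exp (- x) * H x - F x + J x).
  assert (HD : forall x y, x0 <= x -> x <= y -> y <= X ->
     Rabs (D y - D x) <= (M + exp (- x0) * eM) * (y - x) ^ 2).
  { intros x y Hx Hxy Hy.
    assert (A1 := iR_minus _ _ _ _ _ _ (iR_scal _ _ _ (exp (- y)) _ (HHd x y Hx Hxy Hy)) (HFd x y Hx Hxy Hy)).
    assert (A2 := iR_minus _ _ _ _ _ _ (HJd x y) (iR_scal _ _ _ (H x) _ (iR_expm x y))).
    assert (B1 := iR_abs _ _ _ _ (M * (y - x)) Hxy A1).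
    assert (B2 := iR_abs _ _ _ _ (exp (- x0) * eM * (y - x)) Hxy A2).
    simpl in B1, B2.
    assert (C1 : Rabs (exp (- y) * (H y - H x) - (F y - F x)) <= M * (y - x) * (y - x)).
    { apply B1. intros s Hs. unfold ef.
      replace (exp (- y) * (exp s * f s) - f s) with (f s * (exp (s - y) - 1)).
      2:{ replace (s - y) with (s + - y) by ring. rewrite exp_plus. ring. }
      rewrite Rabs_mult. apply Rmult_le_compat; try apply Rabs_pos. apply Hb; lra.
      assert (exp (s - y) <= 1) by (rewrite <- exp_0; apply exp_mono; lra).
      generalize (exp_ineq1_le (s - y)); intros.
      rewrite Rabs_left1 by lra. lra. }
    assert (C2 : Rabs (J y - J x - H x * (exp (- x) - exp (- y))) <= exp (- x0) * eM * (y - x) * (y - x)).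
    { apply B2. intros s Hs. unfold k, Hc. rewrite Hcl2 by lra.
      replace (exp (- s) * H s - H x * exp (- s)) with (exp (- s) * (H s - H x)) by ring.
      rewrite Rabs_mult, Rabs_pos_eq by (left; apply exp_pos).
      replace (exp (- x0) * eM * (y - x)) with (exp (- x0) * (eM * (y - x))) by ring.
      apply Rmult_le_compat. left; apply exp_pos. apply Rabs_pos. apply exp_mono; lra.
      eapply Rle_trans. apply HHl; lra. apply Rmult_le_compat_l; lra. }
    replace (D y - D x) with ((exp (- y) * (H y - H x) - (F y - F x)) +
                              (J y - J x - H x * (exp (- x) - exp (- y)))) by (unfold D; ring).
    eapply Rle_trans. apply Rabs_triang. simpl. nra. }
  assert (HD0 : D x0 = 0).
  { unfold D, H, F, J. rewrite !RInt_pt. ring. }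
  assert (HDx : forall x, x0 <= x <= X -> D x = 0).
  { intros x Hx. rewrite <- HD0. apply quad_const with (M + exp (- x0) * eM). lra.
    apply Rplus_le_le_0_compat; auto. apply Rmult_le_pos; auto. left; apply exp_pos.
    intros a b ? ? ?. apply HD; lra. }
  intros u t Hu Hut Ht.
  assert (E : exp (- t) * H t - exp (- u) * H u = (F t - F u) - (J t - J u)).
  { generalize (HDx t ltac:(lra)) (HDx u ltac:(lra)). unfold D. intros; lra. }
  fold ef. fold H. fold ef in E. rewrite E.
  apply iR_minus. apply HFd; lra.
  apply iR_ext_on with k; auto. intros s Hs. unfold k, Hc. rewrite Hcl2 by lra. reflexivity. Qed.

Lemma cont_ind (P : R -> Prop) : P 0 ->
  (forall t, 0 < t -> (forall s, 0 <= s < t -> P s) -> P t) ->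
  (forall t, 0 <= t -> (forall s, 0 <= s <= t -> P s) -> exists d, 0 < d /\ forall s, t <= s <= t + d -> P s) ->
  forall t, 0 <= t -> P t.
Proof. intros H0 Hc He t1 Ht1. apply NNPP. intros Hn.
  set (E := fun x => 0 <= x /\ forall s, 0 <= s <= x -> P s).
  assert (Hb : bound E).
  { exists t1. intros x [Hx Hs]. destruct (Rle_dec x t1); auto. exfalso; apply Hn; apply Hs; lra. }
  assert (Hne : exists x, E x). { exists 0. split. lra. intros s Hs. replace s with 0 by lra. auto. }
  destruct (completeness E Hb Hne) as [m [Hub Hlub]].
  assert (Hm0 : 0 <= m). { apply Hub. split. lra. intros s Hs. replace s with 0 by lra. auto. }
  assert (Hlt : forall s, 0 <= s < m -> P s).
  { intros s Hs. apply NNPP. intros Hps.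
    assert (m <= s). { apply Hlub. intros x [Hx Hx']. destruct (Rle_dec x s); auto.
      exfalso; apply Hps; apply Hx'; lra. } lra. }
  assert (Hm : P m). { destruct (Req_dec m 0). subst; auto. apply Hc; auto. lra. }
  destruct (He m Hm0) as [d [Hd Hd']].
  { intros s Hs. destruct (Req_dec s m). subst; auto. apply Hlt; lra. }
  assert (m + d <= m).
  { apply Hub. split. lra. intros s Hs. destruct (Rle_dec s m).
    destruct (Req_dec s m). subst; auto. apply Hlt; lra. apply Hd'; lra. }
  lra. Qed.

Lemma last_nonneg g a b L : a <= b -> 0 <= L ->
  (forall x y, a <= x <= b -> a <= y <= b -> Rabs (g x - g y) <= L * Rabs (x - y)) ->
  0 <= g a -> exists u, a <= u <= b /\ 0 <= g u /\ forall v, u < v <= b -> g v < 0.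
Proof. intros Hab HL Hg Ha.
  set (E := fun x => a <= x <= b /\ 0 <= g x).
  assert (Hb : bound E). { exists b. intros x [Hx _]. lra. }
  assert (Hne : exists x, E x). { exists a. split; auto. lra. }
  destruct (completeness E Hb Hne) as [m [Hub Hlub]].
  assert (Ham : a <= m) by (apply Hub; split; auto; lra).
  assert (Hmb : m <= b) by (apply Hlub; intros x [Hx _]; lra).
  exists m. split. lra. split.
  - apply Rnot_lt_le. intros Hgm.
    set (e := - g m / (L + 1)).
    assert (He : 0 < e) by (unfold e; apply Rdiv_lt_0_compat; lra).
    assert (Hx : exists x, E x /\ m - e < x).
    { apply NNPP. intros Hn. assert (m <= m - e). { apply Hlub. intros x Hx. apply Rnot_lt_le. intros Hlt. apply Hn. exists x; auto. } lra. }
    destruct Hx as [x [[Hx Hgx] Hxm]]. assert (x <= m) by (apply Hub; split; auto).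
    specialize (Hg m x ltac:(lra) ltac:(lra)).
    rewrite (Rabs_pos_eq (m - x)) in Hg by lra. apply Rabs_le_between in Hg.
    assert (L * (m - x) <= L * e) by (apply Rmult_le_compat_l; lra).
    assert (L * e < - g m).
    { unfold e. apply Rmult_lt_reg_r with (L + 1). lra.
      replace (L * (- g m / (L + 1)) * (L + 1)) with (L * - g m) by (field; lra). nra. }
    lra.
  - intros v Hv. apply Rnot_le_lt. intros Hgv. assert (v <= m) by (apply Hub; split; auto; lra). lra. Qed.

Lemma closed_nonneg g t L : 0 < t -> 0 <= L -> (forall s, 0 <= s < t -> 0 <= g s) ->
  (forall s, 0 <= s <= t -> Rabs (g t - g s) <= L * Rabs (t - s)) -> 0 <= g t.
Proof. intros Ht HL Hs Hg. apply Rnot_lt_le. intros Hgt.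
  set (d := Rmin (t / 2) (- g t / (2 * (L + 1)))).
  assert (Hd : 0 < d) by (unfold d; apply Rmin_pos; [lra| apply Rdiv_lt_0_compat; lra]).
  assert (Hd1 : d <= t / 2) by apply Rmin_l.
  assert (Hd2 : d <= - g t / (2 * (L + 1))) by apply Rmin_r.
  specialize (Hg (t - d) ltac:(lra)). specialize (Hs (t - d) ltac:(lra)).
  replace (t - (t - d)) with d in Hg by ring. rewrite (Rabs_pos_eq d) in Hg by lra.
  apply Rabs_le_between in Hg.
  assert (L * d <= L * (- g t / (2 * (L + 1)))) by (apply Rmult_le_compat_l; lra).
  assert (L * (- g t / (2 * (L + 1))) < - g t).
  { apply Rmult_lt_reg_r with (2 * (L + 1)). lra.
    replace (L * (- g t / (2 * (L + 1))) * (2 * (L + 1))) with (L * - g t) by (field; lra). nra. }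
  lra. Qed.

Lemma lip_small L e z : 0 <= L -> 0 < e -> 0 <= z -> z < e / (L + 1) -> L * z < e.
Proof. intros HL He Hz Hze.
  assert (z * (L + 1) < e). { apply Rmult_lt_reg_r with (/ (L + 1)). apply Rinv_0_lt_compat; lra.
    replace (z * (L + 1) * / (L + 1)) with z by (field; lra). auto. }
  nra. Qed.

Lemma lip_close g a b L e x y : 0 <= L -> 0 < e ->
  (forall x y, a <= x <= b -> a <= y <= b -> Rabs (g x - g y) <= L * Rabs (x - y)) ->
  a <= x <= b -> a <= y <= b -> Rabs (y - x) < e / (L + 1) -> Rabs (g y - g x) < e.
Proof. intros HL He H Hx Hy Hxy. eapply Rle_lt_trans. apply H; auto.
  apply lip_small; auto. apply Rabs_pos. Qed.

Lemma PW_S ps S x0 X : x0 < 0 -> 0 <= X -> piecewise_continuous ps x0 0 ->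
  (forall th, x0 <= th <= 0 -> S th = ps th) -> Lip S 0 X -> PW S x0 X.
Proof. intros Hx0 HX [[l Hl] [HL HR]] Heq [L [HL0 Hlip]].
  split; [|split].
  - exists (0 :: l). intros x Hx Hn. apply cont_of_ED. intros e He.
    destruct (Rlt_dec x 0) as [Hneg|Hpos].
    + assert (Hw : CW ps x0 0 x). { apply CW_of_cw. apply Hl. lra. intro; apply Hn; right; auto. }
      destruct (ED_of_CW_int ps x0 0 x ltac:(lra) Hw e He) as [d [Hd Hf]].
      exists (Rmin d (Rmin (- x) (x - x0))). split. apply Rmin_pos; auto. apply Rmin_pos; lra.
      intros y Hy. generalize (Rmin_l d (Rmin (- x) (x - x0))) (Rmin_r d (Rmin (- x) (x - x0)))
        (Rmin_l (- x) (x - x0)) (Rmin_r (- x) (x - x0)). intros.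
      apply Rabs_def2 in Hy as Hy'. rewrite !Heq by lra. apply Hf. lra.
    + assert (x <> 0) by (intro; apply Hn; left; auto).
      exists (Rmin (e / (L + 1)) (Rmin x (X - x))). split. apply Rmin_pos. apply Rdiv_lt_0_compat; lra.
      apply Rmin_pos; lra.
      intros y Hy. generalize (Rmin_l (e / (L + 1)) (Rmin x (X - x))) (Rmin_r (e / (L + 1)) (Rmin x (X - x)))
        (Rmin_l x (X - x)) (Rmin_r x (X - x)). intros.
      apply Rabs_def2 in Hy as Hy'. apply (lip_close S 0 X L); auto; lra.
  - intros c Hc. destruct (Rle_dec c 0) as [Hc0|Hc0].
    + destruct (HL c ltac:(lra)) as [Lc Hlim]. exists Lc. apply lim_of_LL.
      intros e He. destruct (LL_of_lim _ _ _ Hlim e He) as [d [Hd Hf]].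
      exists (Rmin d (c - x0)). split. apply Rmin_pos; lra.
      intros y Hy. generalize (Rmin_l d (c - x0)) (Rmin_r d (c - x0)). intros.
      rewrite Heq by lra. apply Hf; lra.
    + exists (S c). apply lim_of_LL. intros e He.
      exists (Rmin (e / (L + 1)) c). split. apply Rmin_pos. apply Rdiv_lt_0_compat; lra. lra.
      intros y Hy. generalize (Rmin_l (e / (L + 1)) c) (Rmin_r (e / (L + 1)) c). intros.
      apply (lip_close S 0 X L); auto; try lra. apply Rabs_def1; lra.
  - intros c Hc. destruct (Rlt_dec c 0) as [Hc0|Hc0].
    + destruct (HR c ltac:(lra)) as [Lc Hlim]. exists Lc. apply lim_of_RL.
      intros e He. destruct (RL_of_lim _ _ _ Hlim e He) as [d [Hd Hf]].
      exists (Rmin d (- c)). split. apply Rmin_pos; lra.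
      intros y Hy. generalize (Rmin_l d (- c)) (Rmin_r d (- c)). intros.
      rewrite Heq by lra. apply Hf; lra.
    + exists (S c). apply lim_of_RL. intros e He.
      exists (Rmin (e / (L + 1)) (X - c)). split. apply Rmin_pos. apply Rdiv_lt_0_compat; lra. lra.
      intros y Hy. generalize (Rmin_l (e / (L + 1)) (X - c)) (Rmin_r (e / (L + 1)) (X - c)). intros.
      apply (lip_close S 0 X L); auto; try lra. apply Rabs_def1; lra. Qed.

Lemma seg_cont2 G x0 t th : 0 <= t + x0 -> Lip G 0 t -> x0 <= th <= 0 -> cont_within (seg G t) x0 0 th.
Proof. intros Ht [L [HL Hlip]] Hth. apply cw_of_CW. intros e He.
  exists (e / (L + 1)). split. apply Rdiv_lt_0_compat; lra.
  intros y Hy Hyt. unfold seg. apply (lip_close G 0 t L); auto; try lra.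
  replace (t + y - (t + th)) with (y - th) by ring. auto. Qed.

Lemma seg_cont ps G x0 t th : x0 < 0 -> 0 <= t ->
  (forall x, x0 <= x <= 0 -> cont_within ps x0 0 x) ->
  (forall x, x0 <= x <= 0 -> G x = ps x) -> Lip G 0 t -> x0 <= th <= 0 ->
  cont_within (seg G t) x0 0 th.
Proof. intros Hx0 Ht Hc Heq [L [HL Hlip]] Hth. apply cw_of_CW. intros e He. unfold seg.
  pose (z := t + th). assert (Hzd : z = t + th) by reflexivity. clearbody z.
  destruct (Rlt_dec z 0) as [Hz|Hz].
  - destruct (CW_of_cw _ _ _ _ (Hc z ltac:(lra)) e He) as [d [Hd Hf]].
    exists (Rmin d (- z)). split. apply Rmin_pos; lra.
    intros y Hy Hyt. generalize (Rmin_l d (- z)) (Rmin_r d (- z)). intros.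
    apply Rabs_def2 in Hyt.
    rewrite !Heq by (lra). rewrite <- Hzd. apply Hf. lra. apply Rabs_def1; lra.
  - destruct (CW_of_cw _ _ _ _ (Hc 0 ltac:(lra)) e He) as [d [Hd Hf]].
    destruct (Req_dec z 0) as [Hz0|Hz0].
    + exists (Rmin d (e / (L + 1))). split. apply Rmin_pos; auto. apply Rdiv_lt_0_compat; lra.
      intros y Hy Hyt. generalize (Rmin_l d (e / (L + 1))) (Rmin_r d (e / (L + 1))). intros.
      apply Rabs_def2 in Hyt. replace (t + th) with 0 by lra.
      destruct (Rle_dec (t + y) 0).
      * rewrite !Heq by (lra). apply Hf. lra. apply Rabs_def1; lra.
      * apply (lip_close G 0 t L); auto; try (lra). apply Rabs_def1; lra.
    + exists (Rmin z (e / (L + 1))). split. apply Rmin_pos. lra. apply Rdiv_lt_0_compat; lra.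
      intros y Hy Hyt. generalize (Rmin_l z (e / (L + 1))) (Rmin_r z (e / (L + 1))). intros.
      apply Rabs_def2 in Hyt.
      apply (lip_close G 0 t L); auto; try (lra). apply Rabs_def1; lra. Qed.

Lemma pow2_ge n : INR n <= 2 ^ n.
Proof. induction n. simpl; lra. rewrite S_INR. simpl.
  assert (1 <= 2 ^ n) by (apply pow_R1_Rle; lra). lra. Qed.

Lemma small_neg a M : 0 < M -> (forall n : nat, - (M / 2 ^ n) <= a) -> 0 <= a.
Proof. intros HM H. apply Rnot_lt_le. intros Ha.
  destruct (archimed_cor1 (- a / M)) as [N [HN1 HN2]]. apply Rdiv_lt_0_compat; lra.
  specialize (H N). assert (HN : 0 < INR N) by (apply lt_0_INR; auto).
  assert (H2 : INR N <= 2 ^ N) by apply pow2_ge.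
  assert (M / 2 ^ N <= M / INR N). { apply Rmult_le_compat_l. lra. apply Rinv_le_contravar; auto. }
  assert (M / INR N < - a).
  { apply Rmult_lt_reg_r with (/ M). apply Rinv_0_lt_compat; auto.
    replace (M / INR N * / M) with (/ INR N) by (field; lra).
    replace (- a * / M) with (- a / M) by (field; lra). auto. }
  lra. Qed.

Lemma half_pow (M : R) (n : nat) : M / 2 ^ S n = 1 / 2 * (M / 2 ^ n).
Proof. assert (2 ^ n <> 0) by (apply pow_nonzero; lra). simpl. field. auto. Qed.

Theorem lemma1 (r tau kappa p : R) (psS psI psQ S I Q : R -> R) :
  0 < r -> 0 < tau -> 0 < kappa -> 0 <= p <= 1 ->
  piecewise_continuous psS (- tau - kappa) 0 ->
  piecewise_continuous psI (- tau - kappa) 0 ->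
  piecewise_continuous psQ (- tau - kappa) 0 ->
  (forall th, - tau - kappa <= th <= 0 -> in_simplex (psS th) (psI th) (psQ th)) ->
  psI 0 >= r * p * RInt (fun th => exp th * psS th * psI th) (- tau) 0 ->
  psQ 0 >= r * eps p tau * RInt (fun th => psS th * psI th) (- tau - kappa) 0 ->
  SIQ_solution r tau kappa p psS psI psQ S I Q ->
  (forall t, 0 <= t -> 0 <= S t /\ 0 <= I t /\ 0 <= Q t /\ S t + I t + Q t = 1) /\
  (forall t, tau + kappa <= t -> in_Ctilde tau kappa (seg S t) (seg I t) (seg Q t)) /\
  (in_Ctilde tau kappa psS psI psQ ->
     forall t, 0 <= t -> in_Ctilde tau kappa (seg S t) (seg I t) (seg Q t)).
Proof.
  intros Hr Htau Hkap Hp PCS PCI PCQ Hsimp HypI HypQ [Hhist Hsol].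
  set (x0 := - tau - kappa).
  assert (Ex0 : x0 = - tau - kappa) by reflexivity.
  assert (Hx0 : x0 < 0) by lra.
  assert (Heps : 0 <= eps p tau) by (unfold eps; apply Rmult_le_pos; [lra | left; apply exp_pos]).
  assert (Hc0 : 0 <= r * eps p tau) by (apply Rmult_le_pos; lra).
  pose (f := fun s => S s * I s).
  assert (HH : forall th, x0 <= th <= 0 -> 0 <= S th /\ 0 <= I th /\ 0 <= Q th /\ S th + I th + Q th = 1).
  { intros th Hth. destruct (Hhist th Hth) as [E1 [E2 E3]]. rewrite E1, E2, E3. apply Hsimp; auto. }
  assert (HSd : forall u t, 0 <= u -> u <= t -> is_RInt (fun s => - r * S s * I s + I s
     + r * eps p tau * S (s - tau - kappa) * I (s - tau - kappa)) u t (S t - S u)).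
  { intros u t Hu Hut. apply iR_extv with ((S t - S 0) - (S u - S 0)). ring.
    apply iR_sub with 0. apply (Hsol u Hu). apply (Hsol t ltac:(lra)). }
  assert (HId : forall u t, 0 <= u -> u <= t -> is_RInt (fun s => r * S s * I s - I s
     - r * eps p tau * S (s - tau) * I (s - tau)) u t (I t - I u)).
  { intros u t Hu Hut. apply iR_extv with ((I t - I 0) - (I u - I 0)). ring.
    apply iR_sub with 0. apply (Hsol u Hu). apply (Hsol t ltac:(lra)). }
  assert (HQd : forall u t, 0 <= u -> u <= t -> is_RInt (fun s => r * eps p tau * (S (s - tau) * I (s - tau)
     - S (s - tau - kappa) * I (s - tau - kappa))) u t (Q t - Q u)).
  { intros u t Hu Hut. apply iR_extv with ((Q t - Q 0) - (Q u - Q 0)). ring.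
    apply iR_sub with 0. apply (Hsol u Hu). apply (Hsol t ltac:(lra)). }
  assert (LS : forall T, 0 <= T -> Lip S 0 T).
  { intros T HT. eapply lip_of_int. exact HT. intros u t ? ? ?. apply HSd; lra. }
  assert (LI : forall T, 0 <= T -> Lip I 0 T).
  { intros T HT. eapply lip_of_int. exact HT. intros u t ? ? ?. apply HId; lra. }
  assert (LQ : forall T, 0 <= T -> Lip Q 0 T).
  { intros T HT. eapply lip_of_int. exact HT. intros u t ? ? ?. apply HQd; lra. }
  assert (Hsum : forall t, 0 <= t -> S t + I t + Q t = 1).
  { intros t Ht.
    pose proof (iR_plus _ _ _ _ _ _ (iR_plus _ _ _ _ _ _ (HSd 0 t (Rle_refl 0) Ht) (HId 0 t (Rle_refl 0) Ht)) (HQd 0 t (Rle_refl 0) Ht)) as K.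
    assert (K' : is_RInt (fun _ => 0) 0 t (S t - S 0 + (I t - I 0) + (Q t - Q 0))).
    { eapply iR_ext; [|exact K]. intros s. simpl. ring. }
    pose proof (iR_uniq _ _ _ _ _ K' (iR_zero 0 t)).
    destruct (HH 0 ltac:(lra)) as [? [? [? ?]]]. lra. }
  assert (HB : forall T, 0 <= T -> exists M, 1 <= M /\ forall s, x0 <= s <= T -> Rabs (S s) <= M /\ Rabs (I s) <= M).
  { intros T HT. destruct (LS T HT) as [L1 [HL1 H1]]. destruct (LI T HT) as [L2 [HL2 H2]].
    exists (1 + (L1 + L2) * T). split. nra.
    intros s Hs. destruct (Rle_dec s 0).
    - destruct (HH s ltac:(lra)) as [? [? [? ?]]]. rewrite !Rabs_pos_eq by lra. split; nra.
    - specialize (H1 s 0 ltac:(lra) ltac:(lra)). specialize (H2 s 0 ltac:(lra) ltac:(lra)).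
      destruct (HH 0 ltac:(lra)) as [? [? [? ?]]].
      rewrite Rminus_0_r, (Rabs_pos_eq s) in H1, H2 by lra.
      assert (Rabs (S s) <= Rabs (S s - S 0) + Rabs (S 0)).
      { replace (S s) with ((S s - S 0) + S 0) at 1 by ring. apply Rabs_triang. }
      assert (Rabs (I s) <= Rabs (I s - I 0) + Rabs (I 0)).
      { replace (I s) with ((I s - I 0) + I 0) at 1 by ring. apply Rabs_triang. }
      rewrite (Rabs_pos_eq (S 0)) in * by lra. rewrite (Rabs_pos_eq (I 0)) in * by lra.
      split; nra. }

  assert (HPW : forall X, 0 <= X -> PW f x0 X /\ PW (fun s => exp s * f s) x0 X).
  { intros X HX.
    assert (P1 : PW S x0 X) by (apply (PW_S psS S x0 X Hx0 HX PCS); [intros th Hth; apply (Hhist th Hth) | apply LS; auto]).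
    assert (P2 : PW I x0 X) by (apply (PW_S psI I x0 X Hx0 HX PCI); [intros th Hth; apply (Hhist th Hth) | apply LI; auto]).
    assert (P3 : PW f x0 X) by (apply (PW_mult S I); auto).
    split; auto. apply (PW_mult exp f); auto. apply PW_cont. apply continuous_exp. }
  pose (H := fun x => RInt (fun y => exp y * f y) x0 x).
  pose (F := fun x => RInt f x0 x).
  assert (HFd : forall X x y, 0 <= X -> x0 <= x -> x <= y -> y <= X -> is_RInt f x y (F y - F x)).
  { intros X x y HX ? ? ?. assert (Hi := PW_int _ x0 X ltac:(lra) (proj1 (HPW X HX))).
    apply iR_sub with x0; apply (RInt_correct (V := R_CompleteNormedModule));
    (apply ex_RInt_Chasles_1 with X; [split; lra | exact Hi]). }
  assert (HHd : forall X x y, 0 <= X -> x0 <= x -> x <= y -> y <= X -> is_RInt (fun y => exp y * f y) x y (H y - H x)).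
  { intros X x y HX ? ? ?. assert (Hi := PW_int _ x0 X ltac:(lra) (proj2 (HPW X HX))).
    apply iR_sub with x0; apply (RInt_correct (V := R_CompleteNormedModule));
    (apply ex_RInt_Chasles_1 with X; [split; lra | exact Hi]). }
  pose (Kf := fun x => exp (- x) * H x).
  pose (W := fun s => r * p * (Kf s - exp (- tau) * Kf (s - tau))).
  pose (V := fun s => I s - W s).
  assert (HV : forall u t, 0 <= u -> u <= t -> is_RInt (fun s => r * (1 - p) * f s - V s) u t (V t - V u)).
  { intros u t Hu Hut. destruct (HB t ltac:(lra)) as [M [HM1 HMb]].
    assert (Hfb : forall s, x0 <= s <= t -> Rabs (f s) <= M * M).
    { intros s Hs. unfold f. rewrite Rabs_mult. destruct (HMb s Hs).
      apply Rmult_le_compat; auto; apply Rabs_pos. }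
    assert (Co := core f x0 t (M * M) ltac:(lra) ltac:(nra) Hfb
       (PW_int _ x0 t ltac:(lra) (proj1 (HPW t ltac:(lra))))
       (PW_int _ x0 t ltac:(lra) (proj2 (HPW t ltac:(lra))))).
    assert (C1 := Co u t ltac:(lra) Hut (Rle_refl t)).
    assert (C2 := Co (u - tau) (t - tau) ltac:(lra) ltac:(lra) ltac:(lra)).
    assert (C2' := iR_shift _ u t (- tau) _ C2).
    assert (C := iR_minus _ _ _ _ _ _ (HId u t Hu Hut)
       (iR_scal _ _ _ (r * p) _ (iR_minus _ _ _ _ _ _ C1 (iR_scal _ _ _ (exp (- tau)) _ C2')))).
    apply iR_extv with (I t - I u - r * p * ((Kf t - Kf u) - exp (- tau) * (Kf (t - tau) - Kf (u - tau)))).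
    { unfold V, W. ring. }
    eapply iR_ext; [|exact C]. intros s. simpl. unfold V, W, Kf, H, f, eps.
    replace (s + - tau) with (s - tau) by ring. ring. }
  assert (HV0 : 0 <= V 0).
  { unfold V, W, Kf.
    assert (E1 : exp (- tau) * (exp (- (0 - tau)) * H (0 - tau)) = H (- tau)).
    { rewrite <- Rmult_assoc, <- exp_plus. replace (- tau + - (0 - tau)) with 0 by ring.
      replace (0 - tau) with (- tau) by ring. rewrite exp_0. ring. }
    rewrite E1. rewrite Ropp_0, exp_0, Rmult_1_l.
    assert (E2 : H 0 - H (- tau) = RInt (fun th => exp th * psS th * psI th) (- tau) 0).
    { rewrite <- (is_RInt_unique _ _ _ _ (HHd 0 (- tau) 0 (Rle_refl 0) ltac:(lra) ltac:(lra) (Rle_refl 0))).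
      apply RInt_ext. intros x Hx. rewrite Rmin_left in Hx by lra. rewrite Rmax_right in Hx by lra.
      unfold f. destruct (Hhist x ltac:(lra)) as [E3 [E4 _]].
      assert (EE : exp x * (S x * I x) = exp x * psS x * psI x) by (rewrite E3, E4; ring). exact EE. }
    rewrite E2. destruct (Hhist 0 ltac:(lra)) as [_ [E5 _]]. rewrite E5. lra. }

  assert (LV : forall T, 0 <= T -> Lip V 0 T).
  { intros T HT. eapply lip_of_int. exact HT. intros u t ? ? ?. apply HV; lra. }
  assert (Hpos : forall t, 0 <= t -> 0 <= S t /\ 0 <= I t /\ 0 <= V t).
  { apply (cont_ind (fun t => 0 <= S t /\ 0 <= I t /\ 0 <= V t)).
    - destruct (HH 0 ltac:(lra)) as [? [? _]]. auto.
    - intros t Ht Hlt.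
      destruct (LS t ltac:(lra)) as [L1 [HL1 H1]].
      destruct (LI t ltac:(lra)) as [L2 [HL2 H2]].
      destruct (LV t ltac:(lra)) as [L3 [HL3 H3]].
      split; [|split].
      + apply closed_nonneg with L1; auto. intros s Hs; apply (Hlt s Hs).
        intros s Hs; apply H1; lra.
      + apply closed_nonneg with L2; auto. intros s Hs; apply (Hlt s Hs).
        intros s Hs; apply H2; lra.
      + apply closed_nonneg with L3; auto. intros s Hs; apply (Hlt s Hs).
        intros s Hs; apply H3; lra.
    - intros a Ha Ga.
      assert (fpos : forall s, x0 <= s <= a -> 0 <= f s).
      { intros s Hs. unfold f. destruct (Rle_dec s 0).
        destruct (HH s ltac:(lra)) as [? [? _]]. apply Rmult_le_pos; auto.
        destruct (Ga s ltac:(lra)) as [? [? _]]. apply Rmult_le_pos; auto. }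
      destruct (HB (a + tau) ltac:(lra)) as [M [HM1 HMb]].
      destruct (LS (a + tau) ltac:(lra)) as [L1 [HL1 H1]].
      destruct (LV (a + tau) ltac:(lra)) as [L3 [HL3 H3]].
      set (K := 2 * r * M + 1).
      assert (HK : 1 <= K) by (unfold K; nra).
      set (d := Rmin (tau / 2) (1 / (2 * K))).
      assert (Hd : 0 < d) by (unfold d; apply Rmin_pos; [lra | apply Rdiv_lt_0_compat; lra]).
      assert (Hd1 : d <= tau / 2) by apply Rmin_l.
      assert (Hd2 : d <= 1 / (2 * K)) by apply Rmin_r.
      assert (HKd : K * d <= 1 / 2).
      { apply Rle_trans with (K * (1 / (2 * K))). apply Rmult_le_compat_l; lra.
        right; field; lra. }
      assert (step : forall B, 0 <= B -> (forall s, a <= s <= a + d -> - B <= S s /\ - B <= I s) ->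
         forall s, a <= s <= a + d -> - (K * d * B) <= S s /\ - (K * d * B) <= I s /\ - (K * d * B) <= V s).
      { intros B HB0 HBs s Hs.
        assert (HMB : 0 <= M * B) by nra.
        assert (fJ : forall y, a <= y <= a + d -> - (M * B) <= f y).
        { intros y Hy. destruct (HBs y Hy) as [B1 B2]. destruct (HMb y ltac:(lra)) as [M1 M2].
          apply Rabs_le_between in M1; apply Rabs_le_between in M2. unfold f.
          destruct (Rle_dec 0 (S y)); destruct (Rle_dec 0 (I y)); nra. }
        assert (HrMBd : 0 <= r * M * B * d) by (repeat apply Rmult_le_pos; lra).
        assert (EK : K * d * B = 2 * (r * M * B * d) + B * d) by (unfold K; ring).
        assert (HBd : 0 <= B * d) by nra.
        assert (HSs : - (K * d * B) <= S s).
        { destruct (Rle_dec 0 (S s)) as [P|P]. lra.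
          destruct (last_nonneg S a s L1 ltac:(lra) HL1 ltac:(intros x y Hx Hy; apply H1; lra)
             ltac:(apply (Ga a); lra)) as [u [Hu [HSu HSn]]].
          assert (Hlow := iR_lower _ u s (S s - S u) (- ((r * M + 1) * B)) ltac:(lra) (HSd u s ltac:(lra) ltac:(lra))).
          assert (Hlow' : - ((r * M + 1) * B) * (s - u) <= S s - S u).
          { apply Hlow. intros y Hy.
            assert (Hy1 : a <= y <= a + d) by lra.
            destruct (HBs y Hy1) as [B1 B2]. destruct (HMb y ltac:(lra)) as [M1 M2].
            apply Rabs_le_between in M1; apply Rabs_le_between in M2.
            assert (Sy : S y < 0) by (apply HSn; lra).
            assert (Hdel : 0 <= r * eps p tau * S (y - tau - kappa) * I (y - tau - kappa)).
            { rewrite Rmult_assoc. apply Rmult_le_pos; auto. apply (fpos (y - tau - kappa)). lra. }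
            assert (SI : S y * I y <= M * B).
            { destruct (Rle_dec 0 (I y)). nra. nra. }
            assert (r * (S y * I y) <= r * (M * B)) by (apply Rmult_le_compat_l; lra).
            nra. }
          assert (((r * M + 1) * B) * (s - u) <= ((r * M + 1) * B) * d).
          { apply Rmult_le_compat_l. nra. lra. }
          assert (((r * M + 1) * B) * d = r * M * B * d + B * d) by ring.
          lra. }
        assert (HVs : - (r * M * B * d) <= V s).
        { destruct (Rle_dec 0 (V s)) as [P|P]. lra.
          destruct (last_nonneg V a s L3 ltac:(lra) HL3 ltac:(intros x y Hx Hy; apply H3; lra)
             ltac:(apply (Ga a); lra)) as [u [Hu [HVu HVn]]].
          assert (Hlow := iR_lower _ u s (V s - V u) (- (r * M * B)) ltac:(lra) (HV u s ltac:(lra) ltac:(lra))).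
          assert (Hlow' : - (r * M * B) * (s - u) <= V s - V u).
          { apply Hlow. intros y Hy. assert (Vy : V y < 0) by (apply HVn; lra).
            assert (fy := fJ y ltac:(lra)).
            assert (r * (1 - p) * f y >= - (r * M * B)).
            { destruct (Rle_dec 0 (f y)).
              - assert (0 <= r * (1 - p) * f y) by (apply Rmult_le_pos; [apply Rmult_le_pos|]; lra).
                assert (0 <= r * M * B) by (repeat apply Rmult_le_pos; lra). lra.
              - assert ((1 - p) * f y >= f y) by nra.
                assert ((1 - p) * f y >= - (M * B)) by lra.
                assert (Hq : r * ((1 - p) * f y) >= r * (- (M * B))) by (apply Rle_ge, Rmult_le_compat_l; lra).
                rewrite <- Rmult_assoc in Hq. lra. }
            lra. }
          assert ((r * M * B) * (s - u) <= (r * M * B) * d).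
          { apply Rmult_le_compat_l. repeat apply Rmult_le_pos; lra. lra. }
          lra. }
        assert (HWs : - (r * M * B * d) <= W s).
        { assert (EW : W s = r * p * exp (- s) * (H s - H (s - tau))).
          { unfold W, Kf.
            assert (E0 : exp (- tau) * exp (- (s - tau)) = exp (- s)) by (rewrite <- exp_plus; f_equal; ring).
            rewrite <- E0. ring. }
          assert (W1 := iR_lower _ (s - tau) a (H a - H (s - tau)) 0 ltac:(lra)
                    (HHd (a + tau) (s - tau) a ltac:(lra) ltac:(lra) ltac:(lra) ltac:(lra))).
          assert (W1' : 0 * (a - (s - tau)) <= H a - H (s - tau)).
          { apply W1. intros y Hy. apply Rmult_le_pos. left; apply exp_pos. apply fpos; lra. }
          assert (W2 := iR_lower _ a s (H s - H a) (- (exp s * (M * B))) ltac:(lra)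
                    (HHd (a + tau) a s ltac:(lra) ltac:(lra) ltac:(lra) ltac:(lra))).
          assert (W2' : - (exp s * (M * B)) * (s - a) <= H s - H a).
          { apply W2. intros y Hy. assert (fy := fJ y ltac:(lra)).
            assert (Ey : 0 < exp y) by apply exp_pos. assert (Eys : exp y <= exp s) by (apply exp_mono; lra).
            destruct (Rle_dec 0 (f y)).
            - assert (0 <= exp y * f y) by (apply Rmult_le_pos; lra).
              assert (0 <= exp s * (M * B)) by (apply Rmult_le_pos; [left; apply exp_pos | lra]). lra.
            - assert (exp y * f y >= exp s * f y) by nra.
              assert (exp s * f y >= exp s * (- (M * B))) by (apply Rle_ge, Rmult_le_compat_l; [left; apply exp_pos|lra]).
              lra. }
          assert (Hes : 0 < exp s) by apply exp_pos.
          assert (W3 : - (exp s * (M * B)) * d <= H s - H (s - tau)).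
          { assert ((exp s * (M * B)) * (s - a) <= (exp s * (M * B)) * d).
            { apply Rmult_le_compat_l. repeat apply Rmult_le_pos; lra. lra. }
            lra. }
          rewrite EW.
          assert (Hc : 0 <= r * p * exp (- s)) by (apply Rmult_le_pos; [apply Rmult_le_pos|left; apply exp_pos]; lra).
          assert (W4 : r * p * exp (- s) * (- (exp s * (M * B)) * d) <= r * p * exp (- s) * (H s - H (s - tau)))
            by (apply Rmult_le_compat_l; auto).
          assert (E1 : exp (- s) * exp s = 1) by (rewrite <- exp_plus; replace (- s + s) with 0 by ring; apply exp_0).
          assert (E2 : r * p * exp (- s) * (- (exp s * (M * B)) * d) = - (p * (r * M * B * d)))
            by (transitivity (- (r * p * (exp (- s) * exp s) * M * B * d)); [ring | rewrite E1; ring]).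
          rewrite E2 in W4.
          assert (p * (r * M * B * d) <= r * M * B * d) by nra.
          lra. }
        assert (EI : I s = V s + W s) by (unfold V; ring).
        split; [|split]; lra. }
      assert (It : forall n : nat, forall s, a <= s <= a + d -> - (M / 2 ^ n) <= S s /\ - (M / 2 ^ n) <= I s).
      { induction n as [|n IH].
        - intros s Hs. simpl. replace (M / 1) with M by field.
          destruct (HMb s ltac:(lra)) as [A1 A2]. apply Rabs_le_between in A1. apply Rabs_le_between in A2. lra.
        - intros s Hs. assert (HB0 : 0 <= M / 2 ^ n).
          { apply Rdiv_le_0_compat. lra. apply pow_lt; lra. }
          destruct (step (M / 2 ^ n) HB0 IH s Hs) as [A1 [A2 _]].
          assert (K * d * (M / 2 ^ n) <= M / 2 ^ (Datatypes.S n)).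
          { rewrite half_pow. apply Rmult_le_compat_r; auto. }
          lra. }
      exists d. split; auto. intros s Hs.
      assert (HS : 0 <= S s) by (apply small_neg with M; [lra|]; intros n; apply (It n s Hs)).
      assert (HI : 0 <= I s) by (apply small_neg with M; [lra|]; intros n; apply (It n s Hs)).
      assert (Hnn : forall y, a <= y <= a + d -> - 0 <= S y /\ - 0 <= I y).
      { intros y Hy. rewrite Ropp_0. split; apply small_neg with M; try lra; intros n; apply (It n y Hy). }
      destruct (step 0 (Rle_refl 0) Hnn s Hs)
        as [_ [_ HVs]].
      rewrite Rmult_0_r, Ropp_0 in HVs. auto. }

  assert (fpos : forall s, x0 <= s -> 0 <= f s).
  { intros s Hs. unfold f. destruct (Rle_dec s 0).
    destruct (HH s ltac:(lra)) as [? [? _]]. apply Rmult_le_pos; auto.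
    destruct (Hpos s ltac:(lra)) as [? [? _]]. apply Rmult_le_pos; auto. }
  assert (HQ : forall t, 0 <= t -> 0 <= Q t).
  { intros t Ht.
    assert (A1 := iR_shift f 0 t (- tau) _ (HFd t (0 + - tau) (t + - tau) Ht ltac:(lra) ltac:(lra) ltac:(lra))).
    assert (A2 := iR_shift f 0 t (- (tau + kappa)) _
       (HFd t (0 + - (tau + kappa)) (t + - (tau + kappa)) Ht ltac:(lra) ltac:(lra) ltac:(lra))).
    assert (A := iR_scal _ _ _ (r * eps p tau) _ (iR_minus _ _ _ _ _ _ A1 A2)).
    assert (A' : is_RInt (fun s => r * eps p tau * (S (s - tau) * I (s - tau)
       - S (s - tau - kappa) * I (s - tau - kappa))) 0 t
       (r * eps p tau * ((F (t + - tau) - F (0 + - tau)) - (F (t + - (tau + kappa)) - F (0 + - (tau + kappa)))))).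
    { eapply iR_ext; [|exact A]. intros s. simpl. unfold f.
      replace (s + - tau) with (s - tau) by ring.
      replace (s + - (tau + kappa)) with (s - tau - kappa) by ring. reflexivity. }
    assert (EQ := iR_uniq _ _ _ _ _ A' (HQd 0 t (Rle_refl 0) Ht)).
    assert (Fx0 : F (0 + - (tau + kappa)) = 0).
    { replace (0 + - (tau + kappa)) with x0 by lra. unfold F. apply RInt_pt. }
    assert (HQ0 : Q 0 >= r * eps p tau * F 0).
    { destruct (Hhist 0 ltac:(lra)) as [_ [_ E5]]. rewrite E5.
      replace (F 0) with (RInt (fun th => psS th * psI th) (- tau - kappa) 0). auto.
      unfold F. apply RInt_ext. intros x Hx. rewrite Rmin_left in Hx by lra. rewrite Rmax_right in Hx by lra.
      unfold f. destruct (Hhist x ltac:(lra)) as [E3 [E4 _]].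
      assert (EE : psS x * psI x = S x * I x) by (rewrite E3, E4; ring). exact EE. }
    assert (P1 := iR_lower _ (- tau) 0 (F 0 - F (- tau)) 0 ltac:(lra)
       (HFd t (- tau) 0 Ht ltac:(lra) ltac:(lra) ltac:(lra))).
    assert (P1' : 0 * (0 - - tau) <= F 0 - F (- tau)).
    { apply P1. intros y Hy. apply fpos; lra. }
    assert (P2 := iR_lower _ (t + - (tau + kappa)) (t + - tau) (F (t + - tau) - F (t + - (tau + kappa))) 0 ltac:(lra)
       (HFd t (t + - (tau + kappa)) (t + - tau) Ht ltac:(lra) ltac:(lra) ltac:(lra))).
    assert (P2' : 0 * ((t + - tau) - (t + - (tau + kappa))) <= F (t + - tau) - F (t + - (tau + kappa))).
    { apply P2. intros y Hy. apply fpos; lra. }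
    replace (0 + - tau) with (- tau) in EQ by ring.
    rewrite Fx0 in EQ.
    assert (0 <= r * eps p tau * ((F 0 - F (- tau)) + (F (t + - tau) - F (t + - (tau + kappa))))).
    { apply Rmult_le_pos; auto. lra. }
    assert (r * eps p tau * ((F 0 - F (- tau)) + (F (t + - tau) - F (t + - (tau + kappa))))
      = r * eps p tau * F 0 + r * eps p tau * (F (t + - tau) - F (- tau) - (F (t + - (tau + kappa)) - 0))) by ring.
    lra. }
  assert (Claim1 : forall t, 0 <= t -> 0 <= S t /\ 0 <= I t /\ 0 <= Q t /\ S t + I t + Q t = 1).
  { intros t Ht. destruct (Hpos t Ht) as [? [? _]]. repeat split; auto. }
  split; [exact Claim1|split].
  - intros t Ht. assert (Ht0 : 0 <= t + x0) by lra.
    split; [|split; [|split]].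
    + intros th Hth. apply seg_cont2; auto. apply LS; lra.
    + intros th Hth. apply seg_cont2; auto. apply LI; lra.
    + intros th Hth. apply seg_cont2; auto. apply LQ; lra.
    + intros th Hth. unfold seg, in_simplex. apply Claim1. lra.
  - intros [CS [CI [CQ Cs]]] t Ht.
    split; [|split; [|split]].
    + intros th Hth. apply (seg_cont psS S x0 t th Hx0 Ht CS); [intros x Hx; apply (Hhist x Hx) | apply LS; lra | exact Hth].
    + intros th Hth. apply (seg_cont psI I x0 t th Hx0 Ht CI); [intros x Hx; apply (Hhist x Hx) | apply LI; lra | exact Hth].
    + intros th Hth. apply (seg_cont psQ Q x0 t th Hx0 Ht CQ); [intros x Hx; apply (Hhist x Hx) | apply LQ; lra | exact Hth].
    + intros th Hth. unfold seg, in_simplex. destruct (Rle_dec (t + th) 0).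
      * destruct (Hhist (t + th) ltac:(lra)) as [E1 [E2 E3]]. rewrite E1, E2, E3. apply Hsimp. lra.
      * apply Claim1. lra.
Qed.
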